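(* Let $D\subset\mathbb{R}^d$ be measurable, $k$ a measurable positive definite kernel on $D$ with all integrals below finite, and $r:D\to[0,\infty)$. Let $\bar{\mathbf{x}}_1,\dots,\bar{\mathbf{x}}_n\in D$ be distinct with replicate counts $a_1,\dots,a_n\ge1$, $N=\sum_ia_i$, with $r(\bar{\mathbf{x}}_i)>0$ for all $i$. Let $\mathbf{K}_n$ be the matrix with entries $k(\bar{\mathbf{x}}_i,\bar{\mathbf{x}}_j)+\delta_{ij}r(\bar{\mathbf{x}}_i)/a_i$ (invertible), $\mathbf{k}(\mathbf{x})=(k(\mathbf{x},\bar{\mathbf{x}}_i))_{i=1}^n$, $w(\mathbf{y},\mathbf{z})=\int_Dk(\mathbf{y},\mathbf{x})k(\mathbf{z},\mathbf{x})\,d\mathbf{x}$, $\mathbf{W}_n=(w(\bar{\mathbf{x}}_i,\bar{\mathbf{x}}_j))_{i,j}$, $\mathbf{w}(\tilde{\mathbf{x}})=(w(\tilde{\mathbf{x}},\bar{\mathbf{x}}_i))_{i=1}^n$, $E=\int_Dk(\mathbf{x},\mathbf{x})\,d\mathbf{x}$, $\check{\sigma}_n^2(\mathbf{x})=k(\mathbf{x},\mathbf{x})-\mathbf{k}(\mathbf{x})^\top\mathbf{K}_n^{-1}\mathbf{k}(\mathbf{x})$, $\sigma_n^2(\mathbf{x})=\check{\sigma}_n^2(\mathbf{x})+r(\mathbf{x})$, and assume $\sigma_n^2(\tilde{\mathbf{x}})>0$ for all $\tilde{\mathbf{x}}\in D$. Define: - for $k\in\{1,\dots,n\}$, $I_{N+1}(\bar{\mathbf{x}}_k)=E-\mathrm{tr}(\mathbf{K}'^{-1}\mathbf{W}_n)$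 where $\mathbf{K}'$ is $\mathbf{K}_n$ with $a_k$ replaced by $a_k+1$ (adding a replicate at $\bar{\mathbf{x}}_k$); - for $\tilde{\mathbf{x}}\in D$, $I_{N+1}(\tilde{\mathbf{x}})=E-\mathrm{tr}(\mathbf{K}_{n+1}^{-1}\mathbf{W}_{n+1})$ where $\mathbf{K}_{n+1}=\begin{bmatrix}\mathbf{K}_n&\mathbf{k}(\tilde{\mathbf{x}})\\\mathbf{k}(\tilde{\mathbf{x}})^\top&k(\tilde{\mathbf{x}},\tilde{\mathbf{x}})+r(\tilde{\mathbf{x}})\end{bmatrix}$ and $\mathbf{W}_{n+1}=\begin{bmatrix}\mathbf{W}_n&\mathbf{w}(\tilde{\mathbf{x}})\\\mathbf{w}(\tilde{\mathbf{x}})^\top&w(\tilde{\mathbf{x}},\tilde{\mathbf{x}})\end{bmatrix}$ (adding $\tilde{\mathbf{x}}$ as a new design site with a single observation). Let $k^*\in\arg\min_{1\le k\le n}I_{N+1}(\bar{\mathbf{x}}_k)$ and $$\mathbf{B}_{k^*}=\frac{(\mathbf{K}_n^{-1})_{\cdot,k^*}(\mathbf{K}_n^{-1})_{k^*,\cdot}}{a_{k^*}(a_{k^*}+1)/r(\bar{\mathbf{x}}_{k^*})-(\mathbf{K}_n^{-1})_{k^*,k^*}},$$ and suppose $\mathrm{tr}(\mathbf{B}_{k^*}\mathbf{W}_n)>0$ (and the denominator of $\mathbf{B}_{k^*}$ is nonzero). If $$r(\tilde{\mathbf{x}})\ \ge\ \frac{\mathbf{k}(\tilde{\mathbf{x}})^\top\mathbf{K}_n^{-1}\mathbf{W}_n\mathbf{K}_n^{-1}\mathbf{k}(\tilde{\mathbf{x}})-2\mathbf{w}(\tilde{\mathbf{x}})^\top\mathbf{K}_n^{-1}\mathbf{k}(\tilde{\mathbf{x}})+w(\tilde{\mathbf{x}},\tilde{\mathbf{x}})}{\mathrm{tr}(\mathbf{B}_{k^*}\mathbf{W}_n)}-\check{\sigma}_n^2(\tilde{\mathbf{x}})\qquad\text{for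 all }\tilde{\mathbf{x}}\in D,$$ then replicating is optimal, i.e. $I_{N+1}(\bar{\mathbf{x}}_{k^*})\le I_{N+1}(\tilde{\mathbf{x}})$ for all $\tilde{\mathbf{x}}\in D$.
   Context: Setting: sequential design for Gaussian process regression with zero-mean GP prior with kernel $k$, independent Gaussian noise of variance $r(\mathbf{x})$, and $a_i$ replicates at unique site $\bar{\mathbf{x}}_i$. The criterion is the integrated mean-squared prediction error (integral over $D$ of the de-noised posterior variance $\check{\sigma}^2$) of the design after one more observation, either a replicate at an existing site or a new site. $\delta_{ij}$ is the Kronecker delta; $(\cdot)_{\cdot,k}$ and $(\cdot)_{k,\cdot}$ denote the $k$-th column and row. *)

(* Defs.v *)
From HB Require Import structures.
From mathcomp Require Import all_boot all_order all_algebra.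
From mathcomp Require Import all_classical all_reals all_analysis.
Set Implicit Arguments. Unset Strict Implicit. Unset Printing Implicit Defensive.
Import Order.TTheory GRing.Theory Num.Theory.
Local Open Scope ring_scope.
Local Open Scope classical_set_scope.

Section GPDefs.
Variables (R : realType) (dsp : measure_display) (T : measurableType dsp).
Variable (mu : {measure set T -> \bar R}).

Definition pd_kernel (D : set T) (k : T -> T -> R) : Prop :=
  (forall x y, D x -> D y -> k x y = k y x) /\
  (forall (m : nat) (x : 'I_m -> T) (c : 'I_m -> R), (forall i, D (x i)) ->
     0 <= \sum_(i < m) \sum_(j < m) c i * c j * k (x i) (x j)).

Variables (D : set T) (k : T -> T -> R) (r : T -> R).

Definition wfun (y z : T) : R := Rintegral mu D (fun x => k y x * k z x).
Definition Efun : R := Rintegral mu D (fun x => k x x).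

Variables (n : nat) (xbar : 'I_n -> T).

Definition Kmat (a : 'I_n -> nat) : 'M[R]_n :=
  \matrix_(i, j) (k (xbar i) (xbar j) + (i == j)%:R * (r (xbar i) / (a i)%:R)).
Definition kvec (x : T) : 'cV[R]_n := \col_i k x (xbar i).
Definition Wmat : 'M[R]_n := \matrix_(i, j) wfun (xbar i) (xbar j).
Definition wvec (x : T) : 'cV[R]_n := \col_i wfun x (xbar i).

Definition sigcheck2 (a : 'I_n -> nat) (x : T) : R :=
  k x x - ((kvec x)^T *m invmx (Kmat a) *m kvec x) 0 0.
Definition sigma2 (a : 'I_n -> nat) (x : T) : R := sigcheck2 a x + r x.

Definition I_rep (a : 'I_n -> nat) (l : 'I_n) : R :=
  Efun - \tr (invmx (Kmat (fun i => (a i + (i == l))%N)) *m Wmat).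

Definition Kext (a : 'I_n -> nat) (x : T) : 'M[R]_(n + 1) :=
  block_mx (Kmat a) (kvec x) (kvec x)^T (k x x + r x)%:M.
Definition Wext (x : T) : 'M[R]_(n + 1) :=
  block_mx Wmat (wvec x) (wvec x)^T (wfun x x)%:M.

Definition I_new (a : 'I_n -> nat) (x : T) : R :=
  Efun - \tr (invmx (Kext a x) *m Wext x).

Definition Bdenom (a : 'I_n -> nat) (l : 'I_n) : R :=
  (a l)%:R * (a l + 1)%:R / r (xbar l) - invmx (Kmat a) l l.
Definition Bmat (a : 'I_n -> nat) (l : 'I_n) : 'M[R]_n :=
  (Bdenom a l)^-1 *: (col l (invmx (Kmat a)) *m row l (invmx (Kmat a))).

Definition rhs_bound (a : 'I_n -> nat) (l : 'I_n) (x : T) : R :=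
  (((kvec x)^T *m invmx (Kmat a) *m Wmat *m invmx (Kmat a) *m kvec x) 0 0
   - 2 * ((wvec x)^T *m invmx (Kmat a) *m kvec x) 0 0 + wfun x x)
  / \tr (Bmat a l *m Wmat) - sigcheck2 a x.

End GPDefs.

(* Main.v *)
Require Import Defs.
From HB Require Import structures.
From mathcomp Require Import all_boot all_order all_algebra.
From mathcomp Require Import all_classical all_reals all_analysis.
From mathcomp Require Import ring lra.
Import Order.TTheory GRing.Theory Num.Theory.
Local Open Scope ring_scope.
Local Open Scope classical_set_scope.

Lemma inv_eq (F : fieldType) m (A B : 'M[F]_m) : A *m B = 1%:M -> invmx A = B.
Proof.
move=> AB; have [Au _] := mulmx1_unit AB.
by rewrite -[invmx A]mulmx1 -AB mulmxA mulVmx // mul1mx.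
Qed.

Lemma tr11 (F : fieldType) (X : 'M[F]_1) : \tr X = X 0 0.
Proof. by rewrite {1}[X]mx11_scalar mxtrace_scalar. Qed.

Lemma schur_tr (F : fieldType) n (A : 'M[F]_n) (b : 'cV_n) (c : F) (W : 'M[F]_n)
  (w : 'cV_n) (ww : F) :
  A \in unitmx -> (invmx A)^T = invmx A ->
  c - (b^T *m invmx A *m b) 0 0 != 0 ->
  \tr (invmx (block_mx A b b^T c%:M) *m block_mx W w w^T ww%:M) =
  \tr (invmx A *m W) + ((b^T *m invmx A *m W *m invmx A *m b) 0 0
     - 2 * ((w^T *m invmx A *m b) 0 0) + ww) / (c - (b^T *m invmx A *m b) 0 0).
Proof.
move=> Au Asym.
set Ai := invmx A; set q := (b^T *m Ai *m b) 0 0; move=> s0.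
set t := (c - q)^-1.
have ts : t * (c - q) = 1 by rewrite mulVf.
have qE : b^T *m Ai *m b = q%:M by rewrite {1}[b^T *m Ai *m b]mx11_scalar.
have AAi : A *m Ai = 1%:M by rewrite mulmxV.
have -> : invmx (block_mx A b b^T c%:M) =
   block_mx (Ai + t *: (Ai *m b *m (b^T *m Ai))) (- t *: (Ai *m b))
            (- t *: (b^T *m Ai)) t%:M.
  apply: inv_eq; rewrite mulmx_block scalar_mx_block; congr block_mx.
  - rewrite mulmxDr AAi -!scalemxAr !mulmxA AAi mul1mx scaleNr.
    by rewrite addrK.
  - by rewrite -scalemxAr mulmxA AAi mul1mx mul_mx_scalar addrC scaleNr subrr.
  - rewrite mulmxDr -!scalemxAr !mulmxA qE !mul_scalar_mx -!scalemxAl !scalerA.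
    rewrite -[X in X + _ + _]scale1r -!scalerDl.
    apply/eqP; rewrite scaler_eq0; apply/orP; left; apply/eqP.
    rewrite -ts; ring.
  - rewrite -scalemxAr mulmxA qE mul_mx_scalar.
    rewrite !scale_scalar_mx -raddfD /=; congr (_%:M).
    rewrite -ts; ring.
have h1 : \tr (Ai *m b *m (b^T *m Ai) *m W) = (b^T *m Ai *m W *m Ai *m b) 0 0.
  by rewrite -tr11 -mulmxA [LHS]mxtrace_mulC !mulmxA.
have h2 : \tr (Ai *m b *m w^T) = (w^T *m Ai *m b) 0 0.
  by rewrite -tr11 mxtrace_mulC mulmxA.
have h3 : (b^T *m Ai *m w) 0 0 = (w^T *m Ai *m b) 0 0.
  rewrite [in RHS](_ : w^T *m Ai *m b = (b^T *m Ai *m w)^T); first by rewrite [RHS]mxE.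
  by rewrite !trmx_mul trmxK Asym mulmxA.
rewrite mulmx_block mxtrace_block !mxtraceD !tr11 mulmxDl mxtraceD.
rewrite -!scalemxAl !mxtraceZ h1 h2 [X in _ + (X + _)]mxE h3 -scalar_mxM [((t * ww)%:M) 0 0]mxE eqxx mulr1n.
ring.
Qed.

Lemma sm_inv (F : fieldType) n (K : 'M[F]_n) (l : 'I_n) (d : F) :
  K \in unitmx -> d != 0 -> d^-1 - invmx K l l != 0 ->
  invmx (K - d *: delta_mx l l) = invmx K +
    (d^-1 - invmx K l l)^-1 *: (col l (invmx K) *m row l (invmx K)).
Proof.
move=> Ku d0; set Ki := invmx K; set u := d^-1 - Ki l l => u0.
have KKi : K *m Ki = 1%:M by rewrite mulmxV.
pose e : 'cV[F]_n := delta_mx l 0; pose f : 'rV[F]_n := delta_mx 0 l.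
have E : delta_mx l l = e *m f by rewrite mul_delta_mx.
have fe : f *m Ki *m e = (Ki l l)%:M.
  rewrite [LHS]mx11_scalar -rowE -colE; congr (_%:M); by rewrite !mxE.
apply: inv_eq; rewrite colE rowE E -/e -/f.
rewrite mulmxBl mulmxDr mulmxDr KKi -!scalemxAr -!scalemxAl !mulmxA KKi mul1mx.

have g : e *m f *m Ki *m e *m f *m Ki = Ki l l *: (e *m f *m Ki).
  transitivity (e *m (f *m Ki *m e) *m (f *m Ki)); first by rewrite !mulmxA.
  by rewrite fe mul_mx_scalar -scalemxAl mulmxA.
rewrite g !scalerA -addrA (_ : _ - _ = 0) ?addr0 //.
rewrite -scalerDl -scalerBl [X in X *: _](_ : _ = 0) ?scale0r //.
rewrite /u in u0 *; field; rewrite d0 /=.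
apply: contraNneq u0 => h; apply/eqP.
have : (1 + - Ki l l * d) / d = 0 by rewrite h mul0r.
by move=> <-; field.
Qed.

Theorem proposition1 (R : realType) (dsp : measure_display) (T : measurableType dsp)
  (mu : {measure set T -> \bar R}) (D : set T) (k : T -> T -> R) (r : T -> R)
  (n : nat) (xbar : 'I_n -> T) (a : 'I_n -> nat) (kstar : 'I_n) :
  measurable D ->
  pd_kernel D k ->
  (forall y, D y -> measurable_fun D (fun x => k y x)) ->
  measurable_fun D (fun x => k x x) ->
  mu.-integrable D (fun x => (k x x)%:E) ->
  (forall y z, D y -> D z -> mu.-integrable D (fun x => (k y x * k z x)%:E)) ->
  (forall x, D x -> 0 <= r x) ->
  (forall i, D (xbar i)) ->
  injective xbar ->
  (forall i, (0 < a i)%N) ->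
  (forall i, 0 < r (xbar i)) ->
  Kmat k r xbar a \in unitmx ->
  (forall x, D x -> 0 < sigma2 k r xbar a x) ->
  (forall l, I_rep mu D k r xbar a kstar <= I_rep mu D k r xbar a l) ->
  Bdenom k r xbar a kstar != 0 ->
  0 < \tr (Bmat k r xbar a kstar *m Wmat mu D k xbar) ->
  (forall x, D x -> rhs_bound mu D k r xbar a kstar x <= r x) ->
  forall x, D x -> I_rep mu D k r xbar a kstar <= I_new mu D k r xbar a x.
Proof.
move=> mD [ksym _] _ _ _ _ r0 xD _ a0 rpos Ku sig0 _ Bd0 tpos hb x Dx.
set K := Kmat k r xbar a.
have KT : K^T = K.
  apply/matrixP => i j; rewrite !mxE ksym //.
  by case: (eqVneq i j) => [->|ij] //; rewrite !mul0r.
have KiT : (invmx K)^T = invmx K by rewrite trmx_inv KT.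
set Ki := invmx K in KiT *.
set Q := ((kvec k xbar x)^T *m Ki *m Wmat mu D k xbar *m Ki *m kvec k xbar x) 0 0
   - 2 * ((wvec mu D k xbar x)^T *m Ki *m kvec k xbar x) 0 0 + wfun mu D k x x.
set s := sigma2 k r xbar a x.
have sE : k x x + r x - ((kvec k xbar x)^T *m Ki *m kvec k xbar x) 0 0 = s.
  by rewrite /s /sigma2 /sigcheck2 -/K -/Ki; ring.
have spos : 0 < s by apply: sig0.
have Inew : I_new mu D k r xbar a x = Efun mu D k - (\tr (Ki *m Wmat mu D k xbar) + Q / s).
  rewrite /I_new /Kext /Wext -/K schur_tr // ?sE -/Ki -/Q //.
  by rewrite gt_eqF.
set l := kstar.
set d : R := r (xbar l) / (a l)%:R - r (xbar l) / (a l + 1)%:R.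
have al0 : (a l)%:R != 0 :> R by rewrite pnatr_eq0 -lt0n.
have al1 : (a l)%:R + 1 != 0 :> R by rewrite natr1 pnatr_eq0.
have rl0 : r (xbar l) != 0 by rewrite gt_eqF.
have dE : d = r (xbar l) / ((a l)%:R * (a l + 1)%:R).
  by rewrite /d natrD; field; rewrite al0 al1.
have d0 : d != 0 by rewrite dE mulf_neq0 // invr_eq0 mulf_neq0.
have dinv : d^-1 = (a l)%:R * (a l + 1)%:R / r (xbar l).
  by rewrite dE invf_div.
have KE : Kmat k r xbar (fun i => (a i + (i == l))%N) = K - d *: delta_mx l l.
  apply/matrixP => i j; rewrite !mxE.
  case: (eqVneq i l) => [->|il].
    case: (eqVneq l j) => [<-|lj]; first by rewrite /= /d; ring.
    by rewrite /= !mul0r mulr0 addr0 subr0.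
  by rewrite /= mulr0 subr0 addn0.
have Irep : I_rep mu D k r xbar a l = Efun mu D k -
   (\tr (Ki *m Wmat mu D k xbar) + \tr (Bmat k r xbar a l *m Wmat mu D k xbar)).
  rewrite /I_rep KE sm_inv // ?dinv; last by [].
  by rewrite mulmxDl mxtraceD.
rewrite Irep Inew; apply: lerB => //; rewrite lerD2l.
set t := \tr _ in tpos hb Irep *.
have := hb x Dx; rewrite /rhs_bound -/K -/Ki -/Q.
rewrite lerBlDr -/(sigma2 k r xbar a x) -/s ler_pdivrMr // => hQ.
rewrite ler_pdivrMr // mulrC.
move: hQ.
have -> : r x + sigcheck2 k r xbar a x = s by rewrite /s /sigma2 addrC.
rewrite -/l -/t => hQ. exact: hQ.
Qed.
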